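(* Let $b>0$, let $(\mathbf{x}_t,y_t)_{t\ge 1}$ be an arbitrary sequence with $\mathbf{x}_t\in\mathbb{R}^d$ and $y_t\in\{-1,+1\}$. Run the NR-RLS recursion: initialize $n_0^-=n_0^+=0$, $\mathbf{S}_0^-=\mathbf{S}_0^+=\mathbf{0}\in\mathbb{R}^{d\times d}$, $\mathbf{z}_0^-=\mathbf{z}_0^+=\mathbf{0}\in\mathbb{R}^d$, $\mathbf{R}_0^{-1}=\frac1b\mathbf{I}$, and for $t=1,2,\dots$ set $n_t^-=n_{t-1}^-+\frac{1-y_t}{2}$, $n_t^+=n_{t-1}^++\frac{1+y_t}{2}$, define $\beta_t^-,\beta_t^+,\beta_t,\bar{\mathbf{S}}_{t-1}$ as in the context, and $$\mathbf{G}_t^{-1}=\mathbf{R}_{t-1}^{-1}+\mathbf{R}_{t-1}^{-1}\big(\mathbf{I}-\beta_t\bar{\mathbf{S}}_{t-1}\mathbf{R}_{t-1}^{-1}\big)^{-1}\beta_t\bar{\mathbf{S}}_{t-1}\mathbf{R}_{t-1}^{-1},$$ $$\mathbf{R}_t^{-1}=\mathbf{G}_t^{-1}-\mathbf{G}_t^{-1}\big(\mathbf{I}+\beta_t\mathbf{x}_t\mathbf{x}_t^T\mathbf{G}_t^{-1}\big)^{-1}\beta_t\mathbf{x}_t\mathbf{x}_t^T\mathbf{G}_t^{-1},$$ $\mathbf{S}_t^\pm=\mathbf{S}_{t-1}^\pm+\beta_t^\pm(\mathbf{x}_t\mathbf{x}_t^T-\mathbf{S}_{t-1}^\pm)$,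 $\mathbf{z}_t^\pm=\mathbf{z}_{t-1}^\pm+\beta_t^\pm(\mathbf{x}_ty_t-\mathbf{z}_{t-1}^\pm)$, $\mathbf{z}_t=\mathbf{z}_t^-+\mathbf{z}_t^+$, and $\pmb w_t=\mathbf{R}_t^{-1}\mathbf{z}_t$. Then all the inverses appearing above exist, and for every $t\ge1$ the vector $\pmb w_t$ equals the batch TER solution $$\pmb w_t^{\mathrm{batch}}=\Big(\tfrac{1}{n_t^-}\sum_{i\le t,\,y_i=-1}\mathbf{x}_i\mathbf{x}_i^T+\tfrac{1}{n_t^+}\sum_{j\le t,\,y_j=+1}\mathbf{x}_j\mathbf{x}_j^T+b\mathbf{I}\Big)^{-1}\Big(\tfrac{1}{n_t^-}\sum_{i\le t,\,y_i=-1}\mathbf{x}_iy_i+\tfrac{1}{n_t^+}\sum_{j\le t,\,y_j=+1}\mathbf{x}_jy_j\Big),$$ (i.e. $(\mathbf{X}_t^T\mathbf{W}_t\mathbf{X}_t+b\mathbf{I})^{-1}\mathbf{X}_t^T\mathbf{W}_t\mathbf{y}_t$), which is the unique minimizer over $\pmb w\in\mathbb{R}^d$ of $$J_t(\pmb w)=\frac{1}{2n_t^-}\sum_{i\le t,\,y_i=-1}(y_i-\pmb w^T\mathbf{x}_i)^2+\frac{1}{2n_t^+}\sum_{j\le t,\,y_j=+1}(y_j-\pmb w^T\mathbf{x}_j)^2+\frac b2\|\pmb w\|_2^2 .$$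
   Context: Convention: any term of the form $\frac{1}{n}\sum(\cdots)$ over an empty class (i.e. with $n=0$) is defined to be zero. Definitions: $\beta_t^-=\frac{1}{n_t^-}$ if $y_t=-1$ and $\beta_t^-=0$ if $y_t=+1$; $\beta_t^+=\frac{1}{n_t^+}$ if $y_t=+1$ and $\beta_t^+=0$ if $y_t=-1$ (equivalently $\beta_t^-=\frac{1-y_t}{2n_t^-}$, $\beta_t^+=\frac{1+y_t}{2n_t^+}$ with the convention above); $\beta_t=\beta_t^-+\beta_t^+$; $\bar{\mathbf{S}}_{t-1}=\mathbf{S}_{t-1}^-$ if $y_t=-1$ and $\bar{\mathbf{S}}_{t-1}=\mathbf{S}_{t-1}^+$ if $y_t=+1$. $\mathbf{X}_t$ is the $t\times d$ matrix with rows $\mathbf{x}_1^T,\dots,\mathbf{x}_t^T$, $\mathbf{y}_t=(y_1,\dots,y_t)^T$, and $\mathbf{W}_t$ is the diagonal $t\times t$ matrix whose $i$-th diagonal entry is $1/n_t^-$ if $y_i=-1$ and $1/n_t^+$ if $y_i=+1$. *)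

(* Defs.v *)
From HB Require Import structures.
From mathcomp Require Import all_boot all_order all_algebra.
Set Implicit Arguments. Unset Strict Implicit. Unset Printing Implicit Defensive.
Import Order.TTheory GRing.Theory Num.Theory.
Local Open Scope ring_scope.

Section NRRLS.
Variable R : realFieldType.
Variable d : nat.
Variable b : R.
Variable x : nat -> 'cV[R]_d.   (* x t, used for t >= 1 *)
Variable y : nat -> R.          (* y t in {-1,+1}, used for t >= 1 *)

Fixpoint nminus (t : nat) : R :=
  match t with 0 => 0 | t'.+1 => nminus t' + (1 - y t'.+1) / 2 end.
Fixpoint nplus (t : nat) : R :=
  match t with 0 => 0 | t'.+1 => nplus t' + (1 + y t'.+1) / 2 end.

Definition betam (t : nat) : R := if y t == -1 then (nminus t)^-1 else 0.
Definition betap (t : nat) : R := if y t == 1 then (nplus t)^-1 else 0.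
Definition beta (t : nat) : R := betam t + betap t.

Definition xxT (t : nat) : 'M[R]_d := x t *m (x t)^T.

Record state := State {
  Sm : 'M[R]_d; Sp : 'M[R]_d; zm : 'cV[R]_d; zp : 'cV[R]_d; Rinv : 'M[R]_d }.

Definition Sbar (s : state) (t : nat) : 'M[R]_d :=
  if y t == -1 then Sm s else Sp s.

Definition A1 (s : state) (t : nat) : 'M[R]_d :=
  1%:M - beta t *: (Sbar s t *m Rinv s).

Definition Ginv (s : state) (t : nat) : 'M[R]_d :=
  Rinv s + Rinv s *m invmx (A1 s t) *m (beta t *: Sbar s t) *m Rinv s.

Definition A2 (s : state) (t : nat) : 'M[R]_d :=
  1%:M + beta t *: (xxT t *m Ginv s t).

Definition Rnew (s : state) (t : nat) : 'M[R]_d :=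
  Ginv s t - Ginv s t *m invmx (A2 s t) *m (beta t *: xxT t) *m Ginv s t.

Definition step (s : state) (t : nat) : state :=
  State (Sm s + betam t *: (xxT t - Sm s))
        (Sp s + betap t *: (xxT t - Sp s))
        (zm s + betam t *: (y t *: x t - zm s))
        (zp s + betap t *: (y t *: x t - zp s))
        (Rnew s t).

Fixpoint nrrls (t : nat) : state :=
  match t with
  | 0 => State 0 0 0 0 (b^-1 *: 1%:M)
  | t'.+1 => step (nrrls t') t'.+1
  end.

Definition w_rls (t : nat) : 'cV[R]_d :=
  Rinv (nrrls t) *m (zm (nrrls t) + zp (nrrls t)).

(* batch TER quantities; 1/0 * (empty sum) = 0 realizes the empty-class convention *)
Definition Mbatch (t : nat) : 'M[R]_d :=
  (nminus t)^-1 *: (\sum_(1 <= i < t.+1 | y i == -1) xxT i)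
  + (nplus t)^-1 *: (\sum_(1 <= j < t.+1 | y j == 1) xxT j)
  + b *: 1%:M.

Definition zbatch (t : nat) : 'cV[R]_d :=
  (nminus t)^-1 *: (\sum_(1 <= i < t.+1 | y i == -1) (y i *: x i))
  + (nplus t)^-1 *: (\sum_(1 <= j < t.+1 | y j == 1) (y j *: x j)).

Definition w_batch (t : nat) : 'cV[R]_d := invmx (Mbatch t) *m zbatch t.

Definition J (t : nat) (w : 'cV[R]_d) : R :=
  (2 * nminus t)^-1 * (\sum_(1 <= i < t.+1 | y i == -1) (y i - (w^T *m x i) 0 0) ^+ 2)
  + (2 * nplus t)^-1 * (\sum_(1 <= j < t.+1 | y j == 1) (y j - (w^T *m x j) 0 0) ^+ 2)
  + b / 2 * (\sum_(k < d) (w k 0) ^+ 2).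

End NRRLS.

(* Main.v *)
Require Import Defs.
From HB Require Import structures.
From mathcomp Require Import all_boot all_order all_algebra.
From mathcomp Require Import ring lra.
Set Implicit Arguments. Unset Strict Implicit. Unset Printing Implicit Defensive.
Import Order.TTheory GRing.Theory Num.Theory.
Local Open Scope ring_scope.
Section Mx.
Variable R : realFieldType.
Variable d : nat.
Implicit Types M N P Q X C Ri G Gi Rz : 'M[R]_d.

Lemma inv_uniq M N : M *m N = 1%:M -> invmx M = N.
Proof.
move=> h; have [uM uN] := mulmx1_unit h.
by rewrite -[invmx M]mulmx1 -h mulmxA mulVmx // mul1mx.
Qed.

Lemma woodbury1 Rz C Ri : Rz \in unitmx -> Ri = invmx Rz -> (Rz - C) \in unitmx ->
  (1%:M - C *m Ri) \in unitmx /\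
  invmx (Rz - C) = Ri + Ri *m invmx (1%:M - C *m Ri) *m C *m Ri.
Proof.
move=> uR -> uG.
have e : 1%:M - C *m invmx Rz = (Rz - C) *m invmx Rz.
  by rewrite mulmxBl mulmxV.
have uA : (1%:M - C *m invmx Rz) \in unitmx by rewrite e unitmx_mul uG unitmx_inv.
split => //.
have e2 : invmx (1%:M - C *m invmx Rz) = Rz *m invmx (Rz - C).
  by apply: inv_uniq; rewrite e -mulmxA (mulmxA _ Rz) mulVmx // mul1mx mulmxV.
rewrite e2 (mulmxA (invmx Rz)) mulVmx // mul1mx.
have -> : invmx Rz + invmx (Rz - C) *m C *m invmx Rz
   = invmx (Rz - C) *m ((Rz - C) + C) *m invmx Rz.
  by rewrite mulmxDr mulVmx // mulmxDl mul1mx.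
by rewrite subrK mulmxK.
Qed.

Lemma woodbury2 G C Gi : G \in unitmx -> Gi = invmx G -> (G + C) \in unitmx ->
  (1%:M + C *m Gi) \in unitmx /\
  invmx (G + C) = Gi - Gi *m invmx (1%:M + C *m Gi) *m C *m Gi.
Proof.
move=> uG -> uH.
have e : 1%:M + C *m invmx G = (G + C) *m invmx G.
  by rewrite mulmxDl mulmxV.
have uA : (1%:M + C *m invmx G) \in unitmx by rewrite e unitmx_mul uH unitmx_inv.
split => //.
have e2 : invmx (1%:M + C *m invmx G) = G *m invmx (G + C).
  by apply: inv_uniq; rewrite e -mulmxA (mulmxA _ G) mulVmx // mul1mx mulmxV.
rewrite e2 (mulmxA (invmx G)) mulVmx // mul1mx.
have -> : invmx G - invmx (G + C) *m C *m invmx G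
   = invmx (G + C) *m ((G + C) - C) *m invmx G.
  by rewrite mulmxBr mulVmx // mulmxBl mul1mx.
by rewrite addrK mulmxK.
Qed.
End Mx.
Section Q.
Variable R : realFieldType.
Variable d : nat.
Implicit Types M N : 'M[R]_d.
Implicit Types u v : 'cV[R]_d.

Definition qf M u := (u^T *m M *m u) 0 0.
Definition psd M := forall u, 0 <= qf M u.

Lemma qfD M N u : qf (M + N) u = qf M u + qf N u.
Proof. by rewrite /qf mulmxDr mulmxDl mxE. Qed.
Lemma qfB M N u : qf (M - N) u = qf M u - qf N u.
Proof. by rewrite /qf mulmxBr mulmxBl !mxE. Qed.
Lemma qfZ c M u : qf (c *: M) u = c * qf M u.
Proof. by rewrite /qf -scalemxAr -scalemxAl mxE. Qed.
Lemma qf_sum I r (P : pred I) (F : I -> 'M[R]_d) u :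
  qf (\sum_(i <- r | P i) F i) u = \sum_(i <- r | P i) qf (F i) u.
Proof. by rewrite /qf mulmx_sumr mulmx_suml summxE. Qed.
Lemma qf1 u : qf 1%:M u = \sum_i (u i 0) ^+ 2.
Proof. by rewrite /qf mulmx1 mxE; apply: eq_bigr => i _; rewrite mxE expr2. Qed.
Lemma qfxx (x : 'cV[R]_d) u : qf (x *m x^T) u = ((u^T *m x) 0 0) ^+ 2.
Proof.
rewrite /qf mulmxA -mulmxA -(trmxK (x^T *m u)) trmx_mul trmxK.
by rewrite mxE big_ord1 expr2 !mxE.
Qed.

Lemma psdD M N : psd M -> psd N -> psd (M + N).
Proof. by move=> hM hN u; rewrite qfD addr_ge0. Qed.
Lemma psdZ c M : 0 <= c -> psd M -> psd (c *: M).
Proof. by move=> hc hM u; rewrite qfZ mulr_ge0. Qed.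
Lemma psd_sum I r (P : pred I) (F : I -> 'M[R]_d) :
  (forall i, P i -> psd (F i)) -> psd (\sum_(i <- r | P i) F i).
Proof. by move=> h u; rewrite qf_sum sumr_ge0 // => i /h. Qed.
Lemma psdxx (x : 'cV[R]_d) : psd (x *m x^T).
Proof. by move=> u; rewrite qfxx sqr_ge0. Qed.

Lemma qf1_pos u : u != 0 -> 0 < qf 1%:M u.
Proof.
move=> nz; rewrite qf1 lt_def sumr_ge0 ?andbT => [|i _]; last exact: sqr_ge0.
apply: contra nz => /eqP/psumr_eq0P h.
apply/eqP/matrixP => i j; rewrite (ord1 j) !mxE.
by apply/eqP; rewrite -sqrf_eq0 h // => k _; exact: sqr_ge0.
Qed.

Lemma pd_pos b N u : 0 < b -> psd N -> u != 0 -> 0 < qf (N + b *: 1%:M) u.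
Proof.
move=> hb hN nz; rewrite qfD qfZ.
by apply: ltr_wpDl => //; rewrite mulr_gt0 // qf1_pos.
Qed.

Lemma pd_unit b N : 0 < b -> psd N -> (N + b *: 1%:M) \in unitmx.
Proof.
move=> hb hN; rewrite unitmxE unitfE; apply/negP => /det0P [v nz hv].
have := pd_pos hb hN (u := v^T); rewrite trmx_eq0 => /(_ nz).
by rewrite /qf trmxK hv mul0mx mxE ltxx.
Qed.
End Q.
Section G.
Variable R : realFieldType.

Lemma sum_step (V : zmodType) (P : pred nat) (f : nat -> V) t :
  \sum_(1 <= i < t.+2 | P i) f i
  = \sum_(1 <= i < t.+1 | P i) f i + (if P t.+1 then f t.+1 else 0).
Proof. by rewrite big_mkcond big_nat_recr //= -big_mkcond. Qed.

Variables (V : lmodType R) (n : nat -> R) (P : pred nat) (f : nat -> V).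
Hypothesis n0 : n 0 = 0.
Hypothesis nS : forall t, n t.+1 = n t + (if P t.+1 then 1 else 0).
Hypothesis nge0 : forall t, 0 <= n t.

Lemma npos t : n t + 1 != 0.
Proof. by have := nge0 t; move=> ?; apply/eqP => e; lra. Qed.

Let Sum t := \sum_(1 <= i < t.+1 | P i) f i.

Lemma scl_inv t : n t *: ((n t)^-1 *: Sum t) = Sum t.
Proof.
elim: t => [|t IH]; first by rewrite /Sum big_geq // !scaler0.
rewrite /Sum sum_step nS; case: (P t.+1).
  have h := npos t.
  by rewrite scalerA mulfV // scale1r.
by rewrite addr0 addr0; exact: IH.
Qed.

Lemma scl_step t : (n t.+1)^-1 *: Sum t.+1
  = (n t)^-1 *: Sum t + (if P t.+1 then (n t.+1)^-1 else 0) *: (f t.+1 - (n t)^-1 *: Sum t).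
Proof.
rewrite /Sum sum_step nS; case: (P t.+1); last by rewrite !addr0 scale0r addr0.
have h := npos t.
set T := (n t)^-1 *: _.
have -> : \sum_(1 <= i < t.+1 | P i) f i = n t *: T by rewrite /T scl_inv.
rewrite scalerDr scalerBr scalerA addrA addrAC; congr (_ + _).
rewrite -[X in X - _](scale1r T) -scalerBl; congr (_ *: _).
by field.
Qed.
End G.

Section Step.
Variable R : realFieldType.
Variable d : nat.

Definition Gi_of (be : R) (P Ri : 'M[R]_d) :=
  Ri + Ri *m invmx (1%:M - be *: (P *m Ri)) *m (be *: P) *m Ri.

Lemma rls_step (b be : R) (P Q X Ri : 'M[R]_d) :
  0 < b -> psd P -> psd Q -> psd X -> 0 <= be -> be <= 1 ->
  Ri = invmx (P + Q + b *: 1%:M) ->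
  [/\ 1%:M - be *: (P *m Ri) \in unitmx,
      1%:M + be *: (X *m Gi_of be P Ri) \in unitmx &
      Gi_of be P Ri - Gi_of be P Ri *m invmx (1%:M + be *: (X *m Gi_of be P Ri))
        *m (be *: X) *m Gi_of be P Ri
      = invmx (P + be *: (X - P) + Q + b *: 1%:M)].
Proof.
move=> hb hP hQ hX hb0 hb1 eR.
have uR : P + Q + b *: 1%:M \in unitmx by apply: pd_unit => //; exact: psdD.
have eG : P + Q + b *: 1%:M - be *: P = ((1 - be) *: P + Q) + b *: 1%:M.
  by apply/matrixP => i j; rewrite !mxE; ring.
have uG : P + Q + b *: 1%:M - be *: P \in unitmx.
  rewrite eG; apply: pd_unit => //; apply: psdD => //; apply: psdZ => //; lra.
have [u1 w1] := woodbury1 uR eR uG.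
have eA1 : 1%:M - be *: (P *m Ri) = 1%:M - (be *: P) *m Ri by rewrite scalemxAl.
have eGi : Gi_of be P Ri = invmx (P + Q + b *: 1%:M - be *: P) by rewrite w1 /Gi_of eA1.
have eH : P + Q + b *: 1%:M - be *: P + be *: X = P + be *: (X - P) + Q + b *: 1%:M.
  by apply/matrixP => i j; rewrite !mxE; ring.
have uH : P + Q + b *: 1%:M - be *: P + be *: X \in unitmx.
  rewrite eH; apply: pd_unit => //.
  have -> : P + be *: (X - P) + Q = ((1 - be) *: P + be *: X) + Q.
    by apply/matrixP => i j; rewrite !mxE; ring.
  apply: psdD => //; apply: psdD; apply: psdZ => //; lra.
have [u2 w2] := woodbury2 uG eGi uH.
have eA2 : 1%:M + be *: (X *m Gi_of be P Ri) = 1%:M + (be *: X) *m Gi_of be P Ri.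
  by rewrite scalemxAl.
split.
- by rewrite eA1.
- by rewrite eA2.
- by rewrite eA2 -w2 eH.
Qed.
End Step.

Section Main.
Variable R : realFieldType.
Variable d : nat.
Variable b : R.
Variable x : nat -> 'cV[R]_d.
Variable y : nat -> R.
Hypothesis hb : 0 < b.
Hypothesis hy : forall t : nat, (0 < t)%N -> y t = 1 \/ y t = -1.

Lemma m1n1 : ((-1 : R) == 1) = false.
Proof. by apply/eqP => h; lra. Qed.
Lemma n1m1 : ((1 : R) == -1) = false.
Proof. by apply/eqP => h; lra. Qed.

Lemma nminusS t : nminus y t.+1 = nminus y t + (if y t.+1 == -1 then 1 else 0).
Proof.
rewrite /=; case: (hy (t:=t.+1) erefl) => ->; rewrite ?eqxx ?n1m1; congr (_ + _); by field.
Qed.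
Lemma nplusS t : nplus y t.+1 = nplus y t + (if y t.+1 == 1 then 1 else 0).
Proof.
rewrite /=; case: (hy (t:=t.+1) erefl) => ->; rewrite ?eqxx ?m1n1; congr (_ + _); by field.
Qed.
Lemma nminus_ge0 t : 0 <= nminus y t.
Proof. elim: t => [|t IH] //; rewrite nminusS; case: ifP => _; lra. Qed.
Lemma nplus_ge0 t : 0 <= nplus y t.
Proof. elim: t => [|t IH] //; rewrite nplusS; case: ifP => _; lra. Qed.

Definition Smb t := (nminus y t)^-1 *: (\sum_(1 <= i < t.+1 | y i == -1) xxT x i).
Definition Spb t := (nplus y t)^-1 *: (\sum_(1 <= i < t.+1 | y i == 1) xxT x i).
Definition zmb t := (nminus y t)^-1 *: (\sum_(1 <= i < t.+1 | y i == -1) (y i *: x i)).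
Definition zpb t := (nplus y t)^-1 *: (\sum_(1 <= i < t.+1 | y i == 1) (y i *: x i)).

Lemma Sm_eq t : Sm (nrrls b x y t) = Smb t.
Proof.
elim: t => [|t IH]; first by rewrite /Smb big_geq // scaler0.
rewrite [LHS]/= IH /Smb /betam.
symmetry; exact: (scl_step (n := nminus y) (P := fun i => y i == -1) (xxT x) nminusS nminus_ge0).
Qed.
Lemma Sp_eq t : Sp (nrrls b x y t) = Spb t.
Proof.
elim: t => [|t IH]; first by rewrite /Spb big_geq // scaler0.
rewrite [LHS]/= IH /Spb /betap.
symmetry; exact: (scl_step (n := nplus y) (P := fun i => y i == 1) (xxT x) nplusS nplus_ge0).
Qed.
Lemma zm_eq t : zm (nrrls b x y t) = zmb t.
Proof.
elim: t => [|t IH]; first by rewrite /zmb big_geq // scaler0.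
rewrite [LHS]/= IH /zmb /betam.
symmetry; exact: (scl_step (n := nminus y) (P := fun i => y i == -1) (fun i => y i *: x i) nminusS nminus_ge0).
Qed.
Lemma zp_eq t : zp (nrrls b x y t) = zpb t.
Proof.
elim: t => [|t IH]; first by rewrite /zpb big_geq // scaler0.
rewrite [LHS]/= IH /zpb /betap.
symmetry; exact: (scl_step (n := nplus y) (P := fun i => y i == 1) (fun i => y i *: x i) nplusS nplus_ge0).
Qed.

Lemma psd_Smb t : psd (Smb t).
Proof.
apply: psdZ; first by rewrite invr_ge0 nminus_ge0.
by apply: psd_sum => i _; exact: psdxx.
Qed.
Lemma psd_Spb t : psd (Spb t).
Proof.
apply: psdZ; first by rewrite invr_ge0 nplus_ge0.
by apply: psd_sum => i _; exact: psdxx.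
Qed.

Lemma Mbatch_eq t : Mbatch b x y t = Sm (nrrls b x y t) + Sp (nrrls b x y t) + b *: 1%:M.
Proof. by rewrite Sm_eq Sp_eq. Qed.

Lemma Mbatch_unit t : Mbatch b x y t \in unitmx.
Proof. rewrite Mbatch_eq Sm_eq Sp_eq; apply: pd_unit => //; apply: psdD; [exact: psd_Smb|exact: psd_Spb]. Qed.

Lemma main_step t : Rinv (nrrls b x y t) = invmx (Mbatch b x y t) ->
  [/\ A1 y (nrrls b x y t) t.+1 \in unitmx,
      A2 x y (nrrls b x y t) t.+1 \in unitmx &
      Rinv (nrrls b x y t.+1) = invmx (Mbatch b x y t.+1)].
Proof.
move=> IH; set s := nrrls b x y t.
have hS : psd (Sm s) by rewrite /s Sm_eq; exact: psd_Smb.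
have hP : psd (Sp s) by rewrite /s Sp_eq; exact: psd_Spb.
rewrite Mbatch_eq [nrrls _ _ _ t.+1]/= -/s /step; cbn [Rinv Sm Sp].
rewrite /Rnew /A2 /Ginv /A1 /Sbar /beta /betam /betap.
case: (hy (t:=t.+1) erefl) => ey; rewrite ey ?eqxx ?n1m1 ?m1n1 ?add0r ?addr0.
- have hn : 0 < nplus y t.+1 by rewrite nplusS ey eqxx; have := nplus_ge0 t; lra.
  have hb1 : (nplus y t.+1)^-1 <= 1.
    by rewrite invf_le1 // nplusS ey eqxx; have := nplus_ge0 t; lra.
  have hi : 0 < (nplus y t.+1)^-1 by rewrite invr_gt0.
  have eR : Rinv s = invmx (Sp s + Sm s + b *: 1%:M) by rewrite IH Mbatch_eq (addrC (Sm s)).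
  have [u1 u2 e] := rls_step hb hP hS (psdxx (x t.+1)) (ltW hi) hb1 eR.
  split => //; rewrite /Gi_of in u2 e; rewrite /Rnew /A2 /Ginv /A1 /Sbar /beta /betam /betap /xxT ?ey ?eqxx ?n1m1 ?m1n1 ?add0r ?addr0 e; congr invmx.
  by apply/matrixP => i j; rewrite !mxE; ring.
- have hn : 0 < nminus y t.+1 by rewrite nminusS ey eqxx; have := nminus_ge0 t; lra.
  have hb1 : (nminus y t.+1)^-1 <= 1.
    by rewrite invf_le1 // nminusS ey eqxx; have := nminus_ge0 t; lra.
  have hi : 0 < (nminus y t.+1)^-1 by rewrite invr_gt0.
  have eR : Rinv s = invmx (Sm s + Sp s + b *: 1%:M) by rewrite IH Mbatch_eq.
  have [u1 u2 e] := rls_step hb hS hP (psdxx (x t.+1)) (ltW hi) hb1 eR.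
  split => //; rewrite /Gi_of in u2 e; rewrite /Rnew /A2 /Ginv /A1 /Sbar /beta /betam /betap /xxT ?ey ?eqxx ?n1m1 ?m1n1 ?add0r ?addr0 e; congr invmx.
  by apply/matrixP => i j; rewrite !mxE; ring.
Qed.
End Main.

Section Main2.
Variable R : realFieldType.
Variable d : nat.
Variable b : R.
Variable x : nat -> 'cV[R]_d.
Variable y : nat -> R.
Hypothesis hb : 0 < b.
Hypothesis hy : forall t : nat, (0 < t)%N -> y t = 1 \/ y t = -1.

Lemma Rinv_eq t : Rinv (nrrls b x y t) = invmx (Mbatch b x y t).
Proof.
elim: t => [|t IH]; last by have [] := main_step hb hy IH.
apply/esym/inv_uniq; rewrite /Mbatch !big_geq // !scaler0 !add0r /=.
by rewrite -scalemxAl mul1mx scalerA mulfV ?scale1r // gt_eqF.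
Qed.

Lemma sq_split (I : Type) (r : seq I) (P : pred I) (Y A : I -> R) (c : R) :
  (2 * c)^-1 * \sum_(i <- r | P i) (Y i - A i) ^+ 2
  = (2 * c)^-1 * \sum_(i <- r | P i) (Y i) ^+ 2
    + 2^-1 * (c^-1 * \sum_(i <- r | P i) (A i) ^+ 2)
    - c^-1 * \sum_(i <- r | P i) (Y i * A i).
Proof.
rewrite (eq_bigr (fun i => Y i ^+ 2 - 2 * (Y i * A i) + A i ^+ 2)); last by move=> i _; ring.
rewrite big_split sumrB /= -mulr_sumr invfM.
move: (c^-1) => ci; by field.
Qed.

Definition K t := (2 * nminus y t)^-1 * \sum_(1 <= i < t.+1 | y i == -1) (y i) ^+ 2
  + (2 * nplus y t)^-1 * \sum_(1 <= i < t.+1 | y i == 1) (y i) ^+ 2.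

Lemma lin_sum (w : 'cV[R]_d) c (P : pred nat) t :
  (w^T *m (c *: \sum_(1 <= i < t.+1 | P i) (y i *: x i))) 0 0
  = c * \sum_(1 <= i < t.+1 | P i) (y i * (w^T *m x i) 0 0).
Proof.
rewrite -scalemxAr mxE mulmx_sumr summxE; congr (_ * _).
by apply: eq_bigr => i _; rewrite -scalemxAr mxE.
Qed.

Lemma qf_sumxx (w : 'cV[R]_d) c (P : pred nat) t :
  qf (c *: \sum_(1 <= i < t.+1 | P i) xxT x i) w
  = c * \sum_(1 <= i < t.+1 | P i) ((w^T *m x i) 0 0) ^+ 2.
Proof. by rewrite qfZ qf_sum; congr (_ * _); apply: eq_bigr => i _; rewrite qfxx. Qed.

Lemma J_expand t w : J b x y t w
  = K t + 2^-1 * qf (Mbatch b x y t) w - (w^T *m zbatch x y t) 0 0.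
Proof.
rewrite /J /Mbatch /zbatch !qfD !qf_sumxx qfZ qf1 mulmxDr mxE !lin_sum.
rewrite !sq_split /K; ring.
Qed.
End Main2.

Section Main3.
Variable R : realFieldType.
Variable d : nat.
Variable b : R.
Variable x : nat -> 'cV[R]_d.
Variable y : nat -> R.
Hypothesis hb : 0 < b.
Hypothesis hy : forall t : nat, (0 < t)%N -> y t = 1 \/ y t = -1.

Lemma Mbatch_sym t : (Mbatch b x y t)^T = Mbatch b x y t.
Proof.
rewrite /Mbatch !linearD !linearZ /= !linear_sum /= trmx1.
by congr (_ + _ + _); apply: eq_bigr => i _; rewrite /xxT trmx_mul trmxK.
Qed.

Lemma J_diff t w : J b x y t w
  = J b x y t (w_batch b x y t) + 2^-1 * qf (Mbatch b x y t) (w - w_batch b x y t).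
Proof.
set M := Mbatch b x y t; set ws := w_batch b x y t.
have uM : M \in unitmx by exact: Mbatch_unit.
have ez : zbatch x y t = M *m ws by rewrite /ws /w_batch mulKVmx.
rewrite !J_expand -/M ez.
have e1 : (ws^T *m M *m w) 0 0 = (w^T *m M *m ws) 0 0.
  have hT (A : 'M[R]_1) : A 0 0 = A^T 0 0 by rewrite mxE.
  by rewrite hT trmx_mul trmx_mul trmxK Mbatch_sym mulmxA.
have e2 : qf M (w - ws) = qf M w - (w^T *m M *m ws) 0 0 - (ws^T *m M *m w) 0 0 + qf M ws.
  have sB (A B : 'M[R]_1) : (A - B) 0 0 = A 0 0 - B 0 0 by rewrite !mxE.
  have tB : (w - ws)^T = w^T - ws^T by apply/matrixP => i j; rewrite !mxE.
  by rewrite /qf mulmxBr tB !mulmxBl !sB; ring.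
rewrite e2 e1 /qf (mulmxA w^T) (mulmxA ws^T).
move: (K y t) ((w^T *m M *m w) 0 0) ((w^T *m M *m ws) 0 0) ((ws^T *m M *m ws) 0 0) => k1 k2 k3 k4; by field.
Qed.

Lemma qfM_pos t u : u != 0 -> 0 < qf (Mbatch b x y t) u.
Proof. by move=> nz; apply: pd_pos => //; apply: psdD; [exact: psd_Smb|exact: psd_Spb]. Qed.

Lemma J_min t :
  (forall w : 'cV[R]_d, J b x y t (w_batch b x y t) <= J b x y t w) /\
  (forall w' : 'cV[R]_d,
     (forall w : 'cV[R]_d, J b x y t w' <= J b x y t w) -> w' = w_batch b x y t).
Proof.
split.
  move=> w; rewrite (J_diff t w) lerDl; have [->|nz] := eqVneq (w - w_batch b x y t) 0.
    by rewrite /qf mulmx0 mxE mulr0.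
  by apply: mulr_ge0; [rewrite invr_ge0; lra | exact: ltW (qfM_pos t nz)].
move=> w' h; have := h (w_batch b x y t); rewrite (J_diff t w') gerDl.
apply: contraTeq => nz; rewrite -subr_eq0 in nz.
rewrite -ltNge; apply: mulr_gt0; [rewrite invr_gt0; lra | exact: qfM_pos].
Qed.
End Main3.

Unset Implicit Arguments.

Theorem theorem1 (R : realFieldType) (d : nat) (b : R)
    (x : nat -> 'cV[R]_d) (y : nat -> R)
    (hb : 0 < b)
    (hy : forall t : nat, (0 < t)%N -> y t = 1 \/ y t = -1) :
  forall t : nat, (0 < t)%N ->
  [/\ A1 y (nrrls b x y t.-1) t \in unitmx,
      A2 x y (nrrls b x y t.-1) t \in unitmx,
      Mbatch b x y t \in unitmx,
      w_rls b x y t = w_batch b x y t &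
      (forall w : 'cV[R]_d, J b x y t (w_batch b x y t) <= J b x y t w) /\
      (forall w' : 'cV[R]_d,
         (forall w : 'cV[R]_d, J b x y t w' <= J b x y t w) ->
         w' = w_batch b x y t)].
Proof.
case=> // t _ /=.
have IH : Rinv (nrrls b x y t) = invmx (Mbatch b x y t) by exact: Rinv_eq.
have [u1 u2 _] := main_step hb hy IH.
split => //.
- exact: Mbatch_unit.
- by rewrite /w_rls /w_batch Rinv_eq // zm_eq // zp_eq.
- exact: J_min.
Qed.
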